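(* For every field $\mathbb{F}$, $n,d\ge1$ and every $n^d\times n^d$ matrix $M$ over $\mathbb{F}$, $\mathrm{PT\text{-}rank}(M)$ equals the minimum of $\sum_{\kappa\subseteq[d-1]}\mathrm{rank}(N_\kappa^{\top_\kappa})$ over all families $(N_\kappa)_{\kappa\subseteq[d-1]}$ of $n^d\times n^d$ matrices with $M=\sum_{\kappa\subseteq[d-1]}N_\kappa$.
   Context: Rows and columns are indexed by $[n]^d$. For $k\in[d]$, $M^{\top_k}_{(i_1,\dots,i_d),(j_1,\dots,j_d)}=M_{(\dots,i_{k-1},j_k,i_{k+1},\dots),(\dots,j_{k-1},i_k,j_{k+1},\dots)}$; $M^{\top_\kappa}$ composes these over $k\in\kappa$. $M$ is PT-basic if $\mathrm{rank}(M^{\top_\kappa})=1$ for some $\kappa\subseteq[d]$; $\mathrm{PT\text{-}rank}(M)$ is the least number of PT-basic matrices summing to $M$. *)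

(* Defs.v *)
From mathcomp Require Import all_boot all_order all_algebra.
Set Implicit Arguments. Unset Strict Implicit. Unset Printing Implicit Defensive.
Import GRing.Theory.
Local Open Scope ring_scope.

(* Multi-indices (i_1,...,i_d) in [n]^d, coordinates 0-based: 'I_d, values 'I_n. *)
Definition midx (n d : nat) : finType := {ffun 'I_d -> 'I_n}.

(* n^d x n^d matrices, rows/columns indexed by [n]^d via the enumeration of midx
   (#|midx n d| = n^d). *)
Definition ptmat (F : fieldType) (n d : nat) := 'M[F]_#|midx n d|.

Definition ptentry (F : fieldType) n d (M : ptmat F n d) (r c : midx n d) : F :=
  M (enum_rank r) (enum_rank c).

Definition mix n d (kappa : {set 'I_d}) (r c : midx n d) : midx n d :=
  [ffun k => if k \in kappa then c k else r k].

(* Partial transpose M^{T_kappa}: composition of the T_k for k in kappa,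
   i.e. swap coordinates k \in kappa between row and column index. *)
Definition ptrans (F : fieldType) n d (kappa : {set 'I_d}) (M : ptmat F n d)
  : ptmat F n d :=
  \matrix_(i, j) ptentry M (mix kappa (enum_val i) (enum_val j))
                           (mix kappa (enum_val j) (enum_val i)).

Definition PT_basic (F : fieldType) n d (M : ptmat F n d) : Prop :=
  exists kappa : {set 'I_d}, \rank (ptrans kappa M) = 1%N.

Definition PT_decomp (F : fieldType) n d (M : ptmat F n d) (r : nat) : Prop :=
  exists B : 'I_r -> ptmat F n d,
    (forall i, PT_basic (B i)) /\ M = \sum_(i < r) B i.

Definition is_PT_rank (F : fieldType) n d (M : ptmat F n d) (r : nat) : Prop :=
  PT_decomp M r /\ forall r', PT_decomp M r' -> (r <= r')%N.

(* [d-1] = {1,...,d-1} (1-based), i.e. the 0-based coordinates k with k < d-1. *)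
Definition lowcoords (d : nat) : {set 'I_d} := [set k : 'I_d | (k.+1 < d)%N].

(* Value of sum_{kappa \subseteq [d-1]} rank(N_kappa^{T_kappa}) for a family with
   M = sum_{kappa \subseteq [d-1]} N_kappa (entries N kappa for other kappa ignored). *)
Definition family_cost (F : fieldType) n d (M : ptmat F n d) (m : nat) : Prop :=
  exists N : {set 'I_d} -> ptmat F n d,
    M = \sum_(kappa : {set 'I_d} | kappa \subset lowcoords d) N kappa /\
    m = (\sum_(kappa : {set 'I_d} | kappa \subset lowcoords d)
            \rank (ptrans kappa (N kappa)))%N.

Definition is_min_family_cost (F : fieldType) n d (M : ptmat F n d) (m : nat)
  : Prop :=
  family_cost M m /\ forall m', family_cost M m' -> (m <= m')%N.

(* Main.v *)
Require Import Defs.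
From mathcomp Require Import all_boot all_order all_algebra.
From mathcomp Require Import zify.
Set Implicit Arguments. Unset Strict Implicit. Unset Printing Implicit Defensive.
Import GRing.Theory.
Local Open Scope ring_scope.

Section PT.
Variables (F : fieldType) (n d : nat).
Local Notation pm := (ptmat F n d).

Lemma ptransD k (A B : pm) : ptrans k (A + B) = ptrans k A + ptrans k B.
Proof. by apply/matrixP=> i j; rewrite !mxE /ptentry !mxE. Qed.

Lemma ptrans0 k : ptrans k (0 : pm) = 0.
Proof. by apply/matrixP=> i j; rewrite !mxE /ptentry !mxE. Qed.

Lemma ptransN k (A : pm) : ptrans k (- A) = - ptrans k A.
Proof. by apply/matrixP=> i j; rewrite !mxE /ptentry !mxE. Qed.

Lemma ptransK k (A : pm) : ptrans k (ptrans k A) = A.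
Proof.
apply/matrixP=> i j; rewrite !mxE /ptentry !mxE !enum_rankK.
have E1 : mix k (mix k (enum_val i) (enum_val j)) (mix k (enum_val j) (enum_val i))
   = enum_val i.
  by apply/ffunP=> x; rewrite !ffunE; case: (x \in k).
have E2 : mix k (mix k (enum_val j) (enum_val i)) (mix k (enum_val i) (enum_val j))
   = enum_val j.
  by apply/ffunP=> x; rewrite !ffunE; case: (x \in k).
by rewrite E1 E2 /ptentry !enum_valK.
Qed.

Lemma ptransC k (A : pm) : ptrans (~: k) A = (ptrans k A)^T.
Proof.
apply/matrixP=> i j; rewrite !mxE /ptentry.
have E : forall r c : midx n d, mix (~: k) r c = mix k c r.
  by move=> r c; apply/ffunP=> x; rewrite !ffunE in_setC; case: (x \in k).
by rewrite !E.
Qed.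

Lemma ptrans_sum k (I : finType) (P : pred I) (G : I -> pm) :
  ptrans k (\sum_(i | P i) G i) = \sum_(i | P i) ptrans k (G i).
Proof.
apply: (big_morph (ptrans k)); [exact: ptransD | exact: ptrans0].
Qed.

Lemma PT_decomp0 : PT_decomp (0 : pm) 0.
Proof. by exists (fun _ => 0); split=> [[]//|]; rewrite big_ord0. Qed.

Lemma PT_decompD (A B : pm) a b :
  PT_decomp A a -> PT_decomp B b -> PT_decomp (A + B) (a + b).
Proof.
move=> [B1 [h1 ->]] [B2 [h2 ->]].
exists (fun i => match split i with inl j => B1 j | inr k => B2 k end); split.
  by move=> i; case: (split i).
rewrite big_split_ord /=; congr (_ + _); apply: eq_bigr => i _.
  by have := unsplitK (inl i : 'I_a + 'I_b); rewrite /= => ->.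
by have := unsplitK (inr i : 'I_a + 'I_b); rewrite /= => ->.
Qed.

Lemma PT_decomp1 (A : pm) : PT_basic A -> PT_decomp A 1.
Proof.
move=> h; exists (fun _ => A); split=> //.
by rewrite big_ord1.
Qed.

Lemma PT_decomp_sum (I : finType) (P : pred I) (G : I -> pm) (c : I -> nat) :
  (forall i, P i -> PT_decomp (G i) (c i)) ->
  PT_decomp (\sum_(i | P i) G i) (\sum_(i | P i) c i)%N.
Proof.
move=> h; apply: (big_ind2 (fun X x => PT_decomp X x)).
- exact: PT_decomp0.
- by move=> X x Y y; apply: PT_decompD.
- exact: h.
Qed.

Lemma rank_decomp (A : pm) : exists G : 'I_(\rank A) -> pm,
  A = \sum_i G i /\ forall i, (\rank (G i) <= 1)%N.
Proof.
set X := A *m pinvmx (row_base A).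
have hA : A = X *m row_base A.
  by rewrite /X mulmxKpV // eq_row_base submx_refl.
exists (fun i => col i X *m row i (row_base A)); split.
  rewrite {1}hA; apply/matrixP=> a b; rewrite !mxE summxE.
  by apply: eq_bigr => i _; rewrite !mxE big_ord1 !mxE.
by move=> i; exact: (leq_trans (mxrankM_maxl _ _) (rank_leq_col _)).
Qed.

Lemma PT_decomp_rank k (A : pm) : PT_decomp (ptrans k A) (\rank A).
Proof.
have [G [hA hG]] := rank_decomp A.
have hsum : (\sum_i \rank (G i) = \rank A)%N.
  apply/eqP; rewrite eqn_leq; apply/andP; split.
    have hc : (\sum_(i < \rank A) 1 = \rank A)%N by rewrite sum1_card card_ord.
    apply: (leq_trans _ (eq_leq hc)).
    by apply: leq_sum => i _; exact: hG.
  rewrite [X in (\rank X <= _)%N]hA; apply: (big_ind2 (fun (X : pm) x => \rank X <= x)%N).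
  - by rewrite mxrank0.
  - move=> X x Y y h1 h2; apply: leq_trans (mxrank_add _ _) _.
    exact: leq_add.
  - by [].
rewrite -hsum {1}hA ptrans_sum; apply: PT_decomp_sum => i _.
have := hG i; rewrite leq_eqVlt ltnS leqn0 => /orP[/eqP h1| ].
  by rewrite h1; apply: PT_decomp1; exists k; rewrite ptransK.
rewrite mxrank_eq0 => /eqP ->; rewrite mxrank0 ptrans0; exact: PT_decomp0.
Qed.

Definition FC (M : pm) (m : nat) := exists2 m', family_cost M m' & (m' <= m)%N.

Lemma FC0 : FC 0 0.
Proof.
exists 0%N=> //; exists (fun _ => 0); split.
  by rewrite big1.
by rewrite big1 // => k _; rewrite ptrans0 mxrank0.
Qed.

Lemma FCD (A B : pm) a b : FC A a -> FC B b -> FC (A + B) (a + b).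
Proof.
move=> [a' [N1 [-> ->]] ha] [b' [N2 [-> ->]] hb].
exists (\sum_(k : {set 'I_d} | k \subset lowcoords d) \rank (ptrans k (N1 k + N2 k)%R))%N.
  by exists (fun k => N1 k + N2 k); split=> //; rewrite big_split.
apply: leq_trans _ (leq_add ha hb); rewrite -big_split /=.
by apply: leq_sum => k _; rewrite ptransD mxrank_add.
Qed.

Lemma low_compl (k : {set 'I_d}) : ~~ (k \subset lowcoords d) ->
  ~: k \subset lowcoords d.
Proof.
case/subsetPn=> y yk; rewrite inE -leqNgt => hy.
apply/subsetP=> x; rewrite in_setC inE => xk; rewrite ltnNge; apply/negP=> hx.
have : x = y.
  apply: val_inj; have := ltn_ord x; have := ltn_ord y => /=.
  move: hx hy; clear; lia.
by move=> exy; rewrite exy yk in xk.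
Qed.

Lemma FC1 (A : pm) : PT_basic A -> FC A 1.
Proof.
move=> [k hk].
have [k' [lk' hk']] : exists k' : {set 'I_d}, k' \subset lowcoords d /\ \rank (ptrans k' A) = 1%N.
  case hs: (k \subset lowcoords d); first by exists k.
  exists (~: k); split; first by apply: low_compl; rewrite hs.
  by rewrite ptransC mxrank_tr.
exists 1%N=> //; exists (fun j => if j == k' then A else 0); split.
  by rewrite (bigD1 k') //= eqxx big1 ?addr0 // => j /andP[_ /negbTE ->].
rewrite (bigD1 k') //= eqxx hk' big1 // => j /andP[_ /negbTE ->].
by rewrite ptrans0 mxrank0.
Qed.

Lemma PT_FC (M : pm) r : PT_decomp M r -> FC M r.
Proof.
move=> [B [hB ->]].
have hc : (\sum_(i < r) 1)%N = r by rewrite sum1_card card_ord.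
rewrite -[X in FC _ X]hc.
apply: (big_ind2 (fun X x => FC X x)); [exact: FC0 | by move=> ? ? ? ?; apply: FCD | ].
by move=> i _; apply: FC1.
Qed.

Lemma FC_PT (M : pm) m : family_cost M m -> PT_decomp M m.
Proof.
move=> [N [-> ->]]; apply: PT_decomp_sum => k _.
by rewrite -{1}(ptransK k (N k)); apply: PT_decomp_rank.
Qed.

End PT.

Theorem lemma3p5 (F : fieldType) (n d : nat) (hn : (0 < n)%N) (hd : (0 < d)%N)
  (M : ptmat F n d) (r : nat) :
  is_PT_rank M r <-> is_min_family_cost M r.
Proof.
split.
  move=> [hP hmin]; have [m hm hmr] := PT_FC hP.
  have hrm := hmin _ (FC_PT hm).
  have -> : r = m by apply/eqP; rewrite eqn_leq hrm hmr.
  split=> // m' hm'; rewrite -(_ : r = m); last by apply/eqP; rewrite eqn_leq hrm hmr.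
  exact: hmin _ (FC_PT hm').
move=> [hF hmin]; split; first exact: FC_PT.
move=> r' /PT_FC [m hm hmr]; exact: leq_trans (hmin _ hm) hmr.
Qed.
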